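(* Let $\pi$ be an $r$-homogeneous strongly log-concave distribution with associated matroid $\mathcal{M}=(E,\mathcal{I})$ and weight function $w$, and let $I\in\mathcal{I}$ with $|I|\le r-2$. Let $f:E\setminus I\to\mathbb{R}$ be a function with $\mathbb{E}_{\pi_{I,1}}f=1$. Then $$f^{\top}W_I f\le w(I).$$
   Context: $\pi:2^{[n]}\to\mathbb{R}_{\ge0}$ has generating polynomial $g_\pi(x)=\sum_S\pi(S)\prod_{i\in S}x_i$; it is $r$-homogeneous if its support consists of $r$-sets; a polynomial with nonnegative coefficients is strongly log-concave if for every $J\subseteq[n]$, $\nabla^2\log(\partial_J p)$ is negative semidefinite at the all-ones vector; $\pi$ is strongly log-concave if $g_\pi$ is. The support $\mathcal{B}$ of such $\pi$ is the set of bases of a rank-$r$ matroid $\mathcal{M}=(E,\mathcal{I})$. Fix $Z_r>0$; weights: $w(I)=(r-|I|)!\,Z_r\sum_{B\in\mathcal{B},B\supseteq I}\pi(B)$ for $I\in\mathcal{I}$, and $w(I)=0$ for $I\notin\mathcal{I}$. The distribution $\pi_{I,1}$ on $E\setminus I$ is $\pi_{I,1}(v)=w(I\cup\{v\})/w(I)$ (supported on $v$ with $I\cup\{v\}\in\mathcal{I}$). $W_I$ is the matrix indexed by $E\setminus I$ with $(W_I)_{uv}=w(I\cup\{u,v\})$ for $u\ne v$ and zero diagonal. *)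

(* Defs.v *)
From HB Require Import structures.
From mathcomp Require Import all_boot all_order all_algebra.
From mathcomp Require Import mpoly.
Set Implicit Arguments. Unset Strict Implicit. Unset Printing Implicit Defensive.
Import Order.TTheory GRing.Theory Num.Theory.
Local Open Scope ring_scope.

Section Defs.
Variables (R : realFieldType) (n : nat).

Definition gen_poly (pi : {set 'I_n} -> R) : {mpoly R[n]} :=
  \sum_(S : {set 'I_n}) pi S *: \prod_(i in S) 'X_i.

Definition partialJ (J : {set 'I_n}) (p : {mpoly R[n]}) : {mpoly R[n]} :=
  foldr (fun j q => mderiv j q) p (enum J).

Definition ones : 'I_n -> R := fun _ => 1.

Definition hess_log_at_ones (q : {mpoly R[n]}) (i j : 'I_n) : R :=
  (mderiv j (mderiv i q)).@[ones] / q.@[ones]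
  - (mderiv i q).@[ones] * (mderiv j q).@[ones] / (q.@[ones] ^+ 2).

Definition nsd (H : 'I_n -> 'I_n -> R) : Prop :=
  forall v : 'I_n -> R, \sum_i \sum_j v i * H i j * v j <= 0.

(* strongly log-concave: nonnegative coefficients and for every J, the Hessian
   of log (d_J p) at 1 is NSD (vacuous when d_J p is the zero polynomial, where
   log is undefined; the zero polynomial is conventionally log-concave). *)
Definition strongly_log_concave (p : {mpoly R[n]}) : Prop :=
  (forall m, 0 <= p@_m) /\
  forall J : {set 'I_n}, partialJ J p != 0 -> nsd (hess_log_at_ones (partialJ J p)).

Definition homogeneous_dist (r : nat) (pi : {set 'I_n} -> R) : Prop :=
  forall S, pi S != 0 -> #|S| = r.

(* independent sets of the matroid whose bases are the support of pi *)
Definition indep (pi : {set 'I_n} -> R) (I : {set 'I_n}) : bool :=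
  [exists B : {set 'I_n}, (pi B != 0) && (I \subset B)].

Definition weight (r : nat) (Zr : R) (pi : {set 'I_n} -> R) (I : {set 'I_n}) : R :=
  if indep pi I then
    ((r - #|I|)`!)%:R * Zr * \sum_(B : {set 'I_n} | (pi B != 0) && (I \subset B)) pi B
  else 0.

Definition pi_I1 (r : nat) (Zr : R) (pi : {set 'I_n} -> R) (I : {set 'I_n}) (v : 'I_n) : R :=
  weight r Zr pi (v |: I) / weight r Zr pi I.

Definition expect_I1 r Zr pi (I : {set 'I_n}) (f : 'I_n -> R) : R :=
  \sum_(v | v \notin I) pi_I1 r Zr pi I v * f v.

Definition W_I r Zr pi (I : {set 'I_n}) (u v : 'I_n) : R :=
  if u == v then 0 else weight r Zr pi (u |: (v |: I)).

Definition quadW r Zr pi (I : {set 'I_n}) (f : 'I_n -> R) : R :=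
  \sum_(u | u \notin I) \sum_(v | v \notin I) f u * W_I r Zr pi I u v * f v.

End Defs.

(* Main.v *)
Require Import Defs.
From HB Require Import structures.
From mathcomp Require Import all_boot all_order all_algebra.
From mathcomp Require Import mpoly.
From mathcomp Require Import ring lra zify.
Import Order.TTheory GRing.Theory Num.Theory.
Local Open Scope ring_scope.
Set Implicit Arguments. Unset Strict Implicit. Unset Printing Implicit Defensive.
Section Poly.
Variables (R : realFieldType) (n : nat).

Lemma mderivXU (i j : 'I_n) : mderiv j ('X_i : {mpoly R[n]}) = (i == j)%:R.
Proof.
rewrite mderivX mnm1E; case: eqP => [->|_]; last by rewrite scale0r.
have -> : (U_(j) - U_(j))%MM = 0%MM by apply/mnmP => k; rewrite mnmBE mnm0E subnn.
by rewrite mpolyX0 scale1r.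
Qed.

Lemma mderiv1 (j : 'I_n) : mderiv j (1 : {mpoly R[n]}) = 0.
Proof. by rewrite -[1]mpolyC1 mderivC. Qed.

Lemma mderiv_prodX0 (j : 'I_n) (S : {set 'I_n}) : j \notin S ->
  mderiv j (\prod_(i in S) ('X_i : {mpoly R[n]})) = 0.
Proof.
move=> jS; apply: (big_ind (fun p => mderiv j p = 0)).
- exact: mderiv1.
- by move=> x y hx hy; rewrite mderivM hx hy mul0r mulr0 addr0.
- move=> i iS; rewrite mderivXU; case: eqP => // eij.
  by move: jS; rewrite -eij iS.
Qed.

Lemma mderiv_prodX (j : 'I_n) (S : {set 'I_n}) :
  mderiv j (\prod_(i in S) ('X_i : {mpoly R[n]})) =
  if j \in S then \prod_(i in S :\ j) 'X_i else 0.
Proof.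
case: ifP => jS; last by apply: mderiv_prodX0; rewrite jS.
rewrite (bigD1 j) //=.
rewrite (eq_bigl (fun i => i \in S :\ j)); last by move=> i; rewrite !inE andbC.
rewrite mderivM mderivXU eqxx mul1r.
by rewrite (mderiv_prodX0 (S := S :\ j)) ?mulr0 ?addr0 // !inE eqxx.
Qed.

Lemma meval_prodX (S : {set 'I_n}) :
  (\prod_(i in S) ('X_i : {mpoly R[n]})).@[@ones R n] = 1.
Proof.
rewrite (big_morph _ (mevalM _) (meval1 _)).
by apply: big1 => i _; rewrite mevalXU.
Qed.

Variable pi : {set 'I_n} -> R.

Definition G (J : {set 'I_n}) : {mpoly R[n]} :=
  \sum_(S : {set 'I_n} | J \subset S) pi S *: \prod_(i in S :\: J) 'X_i.
Definition SS (J : {set 'I_n}) : R := \sum_(S : {set 'I_n} | J \subset S) pi S.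

Lemma G0 : G set0 = gen_poly pi.
Proof.
rewrite /G /gen_poly (eq_bigl (fun S => true)); last by move=> S; rewrite sub0set.
by apply: eq_bigr => S _; rewrite setD0.
Qed.

Lemma evalG J : (G J).@[@ones R n] = SS J.
Proof.
rewrite /G raddf_sum /=; apply: eq_bigr => S _.
by rewrite mevalZ meval_prodX mulr1.
Qed.

Lemma dG (j : 'I_n) J : mderiv j (G J) = if j \in J then 0 else G (j |: J).
Proof.
rewrite /G raddf_sum /=.
under eq_bigr do rewrite mderivZ mderiv_prodX.
case: ifP => jJ.
  by apply: big1 => S _; rewrite !inE jJ /= scaler0.
rewrite big_mkcond [RHS]big_mkcond /=; apply: eq_bigr => S _.
rewrite !inE jJ /= subUset sub1set.
case: (j \in S); case: (J \subset S) => //=; rewrite ?scaler0 //.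
congr (_ *: _); apply: eq_bigl => i; by rewrite !inE; case: (i == j); case: (i \in J); case: (i \in S).
Qed.

Lemma partialG (s : seq 'I_n) : uniq s ->
  foldr (fun j q => mderiv j q) (gen_poly pi) s = G [set x in s].
Proof.
elim: s => [|x s IH] /=.
  have -> : [set x in [::]] = set0 :> {set 'I_n} by apply/setP => i; rewrite !inE.
  by rewrite G0.
case/andP => xs us; rewrite IH // dG inE (negbTE xs).
by have -> : [set y in x :: s] = x |: [set y in s] by apply/setP => i; rewrite !inE.
Qed.

Lemma partialJE J : partialJ J (gen_poly pi) = G J.
Proof.
rewrite /partialJ partialG ?enum_uniq //.
by have -> : [set x in enum J] = J by apply/setP => i; rewrite !inE mem_enum.
Qed.

End Poly.
Section Comb.
Variables (R : realFieldType) (n r : nat) (pi : {set 'I_n} -> R).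
Hypothesis pi_hom : homogeneous_dist r pi.

Lemma E1 (J : {set 'I_n}) :
  \sum_i (if i \in J then 0 else SS pi (i |: J)) = (r - #|J|)%:R * SS pi J.
Proof.
rewrite /SS.
transitivity (\sum_i \sum_(B : {set 'I_n}) (if (i \notin J) && (i |: J \subset B) then pi B else 0)).
  apply: eq_bigr => i _; case: (i \in J) => /=; first by rewrite big1.
  by rewrite big_mkcond; apply: eq_bigr.
rewrite exchange_big mulr_sumr [RHS]big_mkcond /=; apply: eq_bigr => B _.
case JB: (J \subset B); last first.
  apply: big1 => i _; case: ifP => // /andP [_]; rewrite subUset => /andP [_].
  by rewrite JB.
rewrite (eq_bigr (fun i => if i \in B :\: J then pi B else 0)); last first.
  move=> i _; rewrite subUset sub1set JB !inE andbT; reflexivity.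
have -> : \sum_i (if i \in B :\: J then pi B else 0) = \sum_(i in (B :\: J)) pi B.
  by rewrite [RHS]big_mkcond.
rewrite sumr_const cardsD (setIidPr JB).
case: (eqVneq (pi B) 0) => [->|pB]; first by rewrite mul0rn !mulr0.
by rewrite mulr_natl (pi_hom pB).
Qed.

End Comb.
Lemma key (R : realFieldType) (T : finType) (q d : R) (a : T -> R) (H : T -> T -> R) (f : T -> R) :
 0 < q -> \sum_i a i = d * q -> (forall i, \sum_j H i j = (d - 1) * a i) ->
 (forall i j, H i j = H j i) ->
 \sum_i a i * f i = d * q ->
 (\sum_i \sum_j (f i - 1) * (H i j / q - a i * a j / q ^+ 2) * (f j - 1) <= 0) ->
 \sum_i \sum_j f i * H i j * f j <= d * (d - 1) * q.
Proof.
move=> q0 sa hrow hsym saf hneg.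
have A0 : \sum_i (f i - 1) * a i = 0.
  transitivity (\sum_i a i * f i - \sum_i a i).
    by rewrite -sumrB; apply: eq_bigr => i _; ring.
  by rewrite saf sa subrr.
have E : \sum_i \sum_j (f i - 1) * (H i j / q - a i * a j / q ^+ 2) * (f j - 1)
   = (\sum_i \sum_j (f i - 1) * H i j * (f j - 1)) / q.
  rewrite mulr_suml; apply: eq_bigr => i _; rewrite mulr_suml.
  transitivity (\sum_j ((f i - 1) * H i j * (f j - 1)) / q
               - (f i - 1) * a i / q ^+ 2 * \sum_j (f j - 1) * a j).
    rewrite mulr_sumr -sumrB; apply: eq_bigr => j _; ring.
  by rewrite A0 mulr0 subr0.
have X0 : \sum_i \sum_j (f i - 1) * H i j * (f j - 1) <= 0.
  move: hneg; rewrite E => h.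
  have := mulr_le0_ge0 h (ltW q0); rewrite -mulrA mulVf ?mulr1 //.
  by rewrite gt_eqF.
have h1 : \sum_i \sum_j f i * H i j = (d - 1) * (d * q).
  rewrite -saf mulr_sumr; apply: eq_bigr => i _.
  by rewrite -mulr_sumr hrow; ring.
have h2 : \sum_i \sum_j H i j * f j = (d - 1) * (d * q).
  rewrite exchange_big -saf mulr_sumr; apply: eq_bigr => j _.
  rewrite -mulr_suml; under eq_bigr do rewrite hsym.
  by rewrite hrow; ring.
have h3 : \sum_i \sum_j H i j = (d - 1) * (d * q).
  by rewrite -sa mulr_sumr; apply: eq_bigr => i _; rewrite hrow.
have : \sum_i \sum_j (f i - 1) * H i j * (f j - 1) =
  \sum_i \sum_j f i * H i j * f j - \sum_i \sum_j f i * H i j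
  - \sum_i \sum_j H i j * f j + \sum_i \sum_j H i j.
  rewrite -!sumrB -big_split /=; apply: eq_bigr => i _.
  rewrite -!sumrB -big_split /=; apply: eq_bigr => j _; ring.
rewrite h1 h2 h3 => h; move: X0; rewrite h => X0.
lra.
Qed.
Lemma weightE (R : realFieldType) (n r : nat) (pi : {set 'I_n} -> R) Zr J :
  weight r Zr pi J = ((r - #|J|)`!)%:R * Zr * SS pi J.
Proof.
rewrite /weight /SS; case: ifP => ind.
  congr (_ * _); rewrite big_mkcond [RHS]big_mkcond; apply: eq_bigr => B _.
  by case: (eqVneq (pi B) 0) => [->|]; case: (J \subset B).
rewrite big1 ?mulr0 // => B JB; apply: contraFeq ind => pB.
by apply/existsP; exists B; rewrite pB JB.
Qed.

Lemma evaldG (R : realFieldType) (n : nat) (pi : {set 'I_n} -> R) j J :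
  (mderiv j (G pi J)).@[@ones R n] = if j \in J then 0 else SS pi (j |: J).
Proof. by rewrite dG; case: ifP => _; [exact: meval0 | exact: evalG]. Qed.

Unset Implicit Arguments. Set Strict Implicit.
Theorem lemma2p4 (R : realFieldType) (n r : nat) (pi : {set 'I_n} -> R) (Zr : R)
  (pi_ge0 : forall S, 0 <= pi S)
  (pi_hom : homogeneous_dist r pi)
  (pi_slc : strongly_log_concave (gen_poly pi))
  (Zr_gt0 : 0 < Zr)
  (I : {set 'I_n}) (I_indep : indep pi I) (I_card : (#|I| + 2 <= r)%N)
  (f : 'I_n -> R) (f_mean : expect_I1 r Zr pi I f = 1) :
  quadW r Zr pi I f <= weight r Zr pi I.
Proof.
set q := SS pi I.
have q0 : 0 < q.
  case/existsP: I_indep => B /andP [pB IB].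
  rewrite /q /SS (bigD1 B) //=.
  have h1 : 0 < pi B by rewrite lt_def pB pi_ge0.
  set rest := (X in pi B + X).
  have h2 : 0 <= rest by apply: sumr_ge0.
  lra.
set a := fun i => if i \in I then 0 else SS pi (i |: I).
set H := fun i j => if i \in I then 0 else if j \in i |: I then 0 else SS pi (j |: (i |: I)).
have hessE : forall i j, hess_log_at_ones (G pi I) i j = H i j / q - a i * a j / q ^+ 2.
  move=> i j; rewrite /hess_log_at_ones !evaldG evalG /a /H -/q.
  case iI: (i \in I); first by rewrite dG iI mderiv0 meval0 !mul0r.
  by rewrite dG iI evaldG.
have GI0 : G pi I != 0.
  apply/eqP => h; have := evalG pi I; rewrite h meval0 -/q => h'.
  by rewrite -h' ltxx in q0.
have hnsd := pi_slc.2 I; rewrite partialJE in hnsd; have {hnsd} hnsd := hnsd GI0.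
have [m hm] : exists m, (r - #|I| = m.+2)%N by exists (r - #|I| - 2)%N; lia.
have dm1 : (m.+2)%:R - 1 = (m.+1)%:R :> R.
  by rewrite -natr1 addrK.
have sa : \sum_i a i = (m.+2)%:R * q by rewrite /a (E1 pi_hom I) hm.
have hrow : forall i, \sum_j H i j = ((m.+2)%:R - 1) * a i.
  move=> i; rewrite /H /a; case iI: (i \in I); first by rewrite big1 // mulr0.
  rewrite (E1 pi_hom (i |: I)) dm1.
  have hc : #|i |: I| = (#|I|).+1 by rewrite cardsU1 iI.
  by rewrite hc; have -> : (r - (#|I|).+1 = m.+1)%N by lia.
have hsym : forall i j, H i j = H j i.
  move=> i j; rewrite /H !in_setU1 [j == i]eq_sym.
  case iI: (i \in I); case jI: (j \in I); rewrite ?orbT //=.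
  by case: eqP => [->|_] //; rewrite setUCA.
have dq0 : (m.+2)%:R * q != 0 by rewrite mulf_neq0 ?pnatr_eq0 // gt_eqF.
have c0 : (m.+1)`!%:R * Zr != 0.
  by rewrite mulf_neq0 ?gt_eqF // ltr0n fact_gt0.
have EM : expect_I1 r Zr pi I f = (\sum_i a i * f i) / ((m.+2)%:R * q).
  rewrite /expect_I1 /pi_I1 mulr_suml big_mkcond [RHS]big_mkcond.
  apply: eq_bigr => v _ /=; rewrite /a; case vI: (v \in I) => /=; first by rewrite !mul0r.
  have hc : #|v |: I| = (#|I|).+1 by rewrite cardsU1 vI.
  rewrite !weightE hc hm -/q; have -> : (r - (#|I|).+1 = m.+1)%N by lia.
  rewrite [(m.+2)`!]factS natrM; move: c0 dq0; rewrite !mulf_eq0 !negb_or => /andP [c1 c2] /andP [d1 d2].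
  field; rewrite d2 c2 c1 !andbT /=.
  apply/negP => /eqP h; have : (0 <= m%:R :> R) by exact: ler0n.
  lra.
have saf : \sum_i a i * f i = (m.+2)%:R * q.
  by move: f_mean; rewrite EM => h; rewrite -(divfK dq0 (\sum_i a i * f i)) h mul1r.
have hneg : \sum_i \sum_j (f i - 1) * (H i j / q - a i * a j / q ^+ 2) * (f j - 1) <= 0.
  have h := hnsd (fun i => f i - 1); apply: le_trans h; rewrite le_eqVlt; apply/orP; left; apply/eqP.
  by apply: eq_bigr => i _; apply: eq_bigr => j _; rewrite hessE.
have K := key q0 sa hrow hsym saf hneg.
have QW : quadW r Zr pi I f = m`!%:R * Zr * \sum_i \sum_j f i * H i j * f j.
  rewrite /quadW mulr_sumr big_mkcond; apply: eq_bigr => u _.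
  case uI: (u \in I) => /=.
    by rewrite mulr_sumr big1 // => v _; rewrite /H uI !(mulr0, mul0r).
  rewrite mulr_sumr big_mkcond; apply: eq_bigr => v _ /=; rewrite /W_I /H uI in_setU1.
  case vI: (v \in I) => /=; first by rewrite orbT !(mulr0, mul0r).
  rewrite orbF [v == u]eq_sym; case: (eqVneq u v) => [->|ne] /=; first by rewrite !(mulr0, mul0r).
  have hc : #|u |: (v |: I)| = (#|I|).+2.
    by rewrite !cardsU1 !in_setU1 (negbTE ne) uI vI.
  rewrite weightE hc setUCA; have -> : (r - (#|I|).+2 = m)%N by lia.
  by ring.
rewrite QW weightE hm -/q.
have -> : (m.+2)`!%:R * Zr * q = m`!%:R * Zr * ((m.+2)%:R * ((m.+2)%:R - 1) * q).
  by rewrite dm1 !factS !natrM; ring.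
by apply: ler_wpM2l => //; apply: mulr_ge0; [exact: ler0n | exact: ltW].
Qed.
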